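(* For $n\ge0$ let $Q_n^L(x)=\sum_{r=0}^{n}\left[\binom{n}{r}\sum_{\ell=0}^{r}\binom{r}{\ell}\frac{1}{\ell!}\right](-x)^r$ (the coefficient polynomials of the linear transformation $x^n\mapsto L_n(x)$). Then for all $n\ge0$, $$(n+1)Q^L_{n+1}(x)=(x-2x^2+x^3)(Q^L_n)'(x)+(n+1-2x-nx^2)Q^L_n(x).$$
   Context: $L_n(x)=\sum_{k=0}^n\binom{n}{k}\frac{(-x)^k}{k!}$ is the $n$th Laguerre polynomial; coefficient polynomials $Q_k$ of a linear operator $T$ on $\mathbb{C}[x]$ are defined by the unique representation $T=\sum_k\frac{Q_k(x)}{k!}D^k$, $D=d/dx$. *)

(* Defs.v *)
From mathcomp Require Import all_boot all_order all_algebra.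
Set Implicit Arguments. Unset Strict Implicit. Unset Printing Implicit Defensive.
Import GRing.Theory Num.Theory.
Local Open Scope ring_scope.

Definition QL (R : numFieldType) (n : nat) : {poly R} :=
  \sum_(r < n.+1)
     (('C(n, r))%:R * \sum_(l < r.+1) ('C(r, l))%:R / (l`!)%:R) *: (- 'X) ^+ r.

(* Main.v *)
Require Import Defs.
From mathcomp Require Import all_boot all_order all_algebra ring lra.
Import GRing.Theory Num.Theory.
Local Open Scope ring_scope.

Lemma fact_neq0 (R : numFieldType) j : (j`!)%:R != 0 :> R.
Proof. by rewrite pnatr_eq0 -lt0n fact_gt0. Qed.

Lemma Sn_neq0 (R : numFieldType) j : (j.+1)%:R != 0 :> R.
Proof. by rewrite pnatr_eq0. Qed.

Lemma tele (R : numFieldType) (K : nat) :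
  \sum_(j < K.+1) ((j * j + j)%:R - K%:R) * ('C(K, j))%:R / (j`!)%:R = 0 :> R.
Proof.
rewrite -(big_mkord xpredT (fun j => ((j * j + j)%:R - K%:R) * ('C(K, j))%:R / (j`!)%:R)).
rewrite (telescope_sumr_eq (fun j => - ((j * j)%:R * ('C(K, j))%:R / (j`!)%:R : R))) //.
  by rewrite bin_small // !(mul0r, mulr0, oppr0, subr0, sub0r, opprK).
move=> j /andP [_ hj].
have h : (j.+1 * 'C(K, j.+1) = (K - j) * 'C(K, j))%N by by rewrite -mul_bin_left -addn1.
have h' : (j.+1)%:R * ('C(K, j.+1))%:R = (K%:R - j%:R) * ('C(K, j))%:R :> R.
  by rewrite -natrM h natrM natrB // -ltnS.
have hc : ('C(K, j.+1))%:R = (K%:R - j%:R) * ('C(K, j))%:R / (j.+1)%:R :> R.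
  by rewrite -h' mulrC mulKf // Sn_neq0.
rewrite hc factS natrM !natrD !natrM.
have := fact_neq0 R j; have := Sn_neq0 R j.
rewrite -addn1 natrD => h1 h2.
field. rewrite h1 h2 /=. have := mulf_neq0 h1 h2. rewrite mulrDl mul1r addrC andbT. done.
Qed.

Definition sL (R : numFieldType) k : R := \sum_(l < k.+1) ('C(k, l))%:R / (l`!)%:R.

Lemma sL_ext (R : numFieldType) k N : (k < N)%N ->
  sL R k = \sum_(l < N) ('C(k, l))%:R / (l`!)%:R.
Proof.
move=> hN; rewrite /sL (big_ord_widen N (fun l => ('C(k, l))%:R / (l`!)%:R : R)) //.
rewrite big_mkcond; apply: eq_bigr => i _ /=.
by case: ltnP => // h; rewrite bin_small // mul0r.
Qed.

Lemma term_rec (R : numFieldType) k j : (j <= k.+2)%N ->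
  (k.+2)%:R * ((k.+2)%:R * (('C(k.+2, j))%:R / (j`!)%:R)
      + (k.+1)%:R * (('C(k, j))%:R / (j`!)%:R)) =
  (k.+2)%:R * ((2 * k.+2)%:R * (('C(k.+1, j))%:R / (j`!)%:R))
   + ((j * j + j)%:R - (k.+2)%:R) * (('C(k.+2, j))%:R / (j`!)%:R) :> R.
Proof.
move=> hj.
have hf := fact_neq0 R j.
case: (ltngtP j k.+2) hj => // [hlt _ | ->] .
  have e1 : ((k.+2) * 'C(k.+1, j) = (k.+2 - j) * 'C(k.+2, j))%N by rewrite -mul_bin_down.
  have e2 : ((k.+1) * 'C(k, j) = (k.+1 - j) * 'C(k.+1, j))%N by rewrite -mul_bin_down.
  have hb : ('C(k.+1, j))%:R = ((k.+2)%:R - j%:R) * ('C(k.+2, j))%:R / (k.+2)%:R :> R.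
    by rewrite -natrB 1?ltnW // -natrM -e1 natrM mulrC mulKf // Sn_neq0.
  have ha : ('C(k, j))%:R = ((k.+1)%:R - j%:R) * ('C(k.+1, j))%:R / (k.+1)%:R :> R.
    by rewrite -natrB // -natrM -e2 natrM mulrC mulKf // Sn_neq0.
  rewrite ha hb.
  have := Sn_neq0 R k; have := Sn_neq0 R k.+1.
  rewrite !natrM !natrD => h1 h2.
  field; rewrite hf /=; apply/andP; split.
  - by rewrite (_ : 2 + k%:R = (k.+2)%:R) //; ring.
  - by rewrite (_ : 1 + k%:R = (k.+1)%:R) //; ring.
move=> _; rewrite (@bin_small k k.+2) // (@bin_small k.+1 k.+2) // binn.
rewrite !natrM !natrD.
field; apply/and3P; split; [exact: fact_neq0 | rewrite (_ : 1 + k%:R = (k.+1)%:R) ?pnatr_eq0 //; ring | rewrite (_ : 2 + k%:R = (k.+2)%:R) ?pnatr_eq0 //; ring].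
Qed.

Lemma sL_rec (R : numFieldType) k :
  (k.+2)%:R * sL R k.+2 + (k.+1)%:R * sL R k = (2 * k.+2)%:R * sL R k.+1.
Proof.
have hK : (k.+2)%:R != 0 :> R by apply: Sn_neq0.
apply: (mulfI hK).
have h1 : (k.+1 < k.+3)%N by [].
have h2 : (k < k.+3)%N by apply: ltnW.
rewrite (@sL_ext R k.+1 k.+3 h1) (@sL_ext R k k.+3 h2) /sL.
rewrite !mulr_sumr -big_split /= mulr_sumr.
rewrite (eq_bigr _ (fun (j : 'I_k.+3) _ => @term_rec R k j (ltn_ord j))) big_split /=.
have ht : \sum_(j < k.+3) ((j * j + j)%:R - (k.+2)%:R) * (('C(k.+2, j))%:R / (j`!)%:R) = 0 :> R.
  by rewrite -[RHS](tele R k.+2); apply: eq_bigr => i _; rewrite mulrA.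
by rewrite ht addr0.
Qed.

Lemma coefQL (R : numFieldType) n k :
  (QL R n)`_k = (-1) ^+ k * (('C(n, k))%:R * sL R k).
Proof.
rewrite /QL coef_sum.
under eq_bigr do rewrite -scaleN1r exprZn coefZ coefZ coefXn.
case: (ltnP k n.+1) => hk.
  rewrite (bigD1 (Ordinal hk)) //= eqxx mulr1.
  rewrite [X in _ + X]big1 ?addr0; first by rewrite mulrC.
  move=> i hi; rewrite eq_sym.
  have -> : (i == k :> nat) = false.
    by apply/negbTE; apply: contra hi => /eqP h; apply/eqP/val_inj.
  by rewrite !mulr0.
rewrite big1 ?bin_small ?mul0r ?mulr0 //.
move=> i _; have -> : (k == i :> nat) = false.
  by apply/negbTE; rewrite neq_ltn (leq_trans (ltn_ord i) hk) orbT.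
by rewrite !mulr0.
Qed.

Lemma cXD (R : numFieldType) (p : {poly R}) i : ('X * p^`())`_i = p`_i *+ i.
Proof. by rewrite coefXM; case: i => [|i] //=; rewrite coef_deriv. Qed.

Lemma sL0 (R : numFieldType) : sL R 0 = 1.
Proof. by rewrite /sL big_ord_recr big_ord0 /= add0r bin0 fact0 divr1. Qed.

Lemma sL1 (R : numFieldType) : sL R 1 = 2.
Proof.
rewrite /sL !big_ord_recr big_ord0 /= add0r !bin0 binn fact0 divr1.
by [].
Qed.

Lemma key (R : numFieldType) n i :
  (n.+1)%:R * (('C(n.+1, i.+2))%:R * sL R i.+2) =
  (n + i.+3)%:R * (('C(n, i.+2))%:R * sL R i.+2)
  + (2 * i.+2)%:R * (('C(n, i.+1))%:R * sL R i.+1)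
  + (i%:R - n%:R) * (('C(n, i))%:R * sL R i) :> R.
Proof.
case: (ltnP n i) => hin.
  have h1 : (n < i.+1)%N by apply: ltnW.
  have h2 : (n < i.+2)%N by apply: ltnW.
  have h3 : (n.+1 < i.+2)%N by [].
  rewrite (bin_small hin) (bin_small h1) (bin_small h2) (bin_small h3); ring.
have F1 : ('C(n, i.+1))%:R = (n%:R - i%:R) * ('C(n, i))%:R / (i.+1)%:R :> R.
  have h : (i.+1 * 'C(n, i.+1) = (n - i) * 'C(n, i))%N by rewrite -mul_bin_left -addn1.
  by rewrite -natrB // -natrM -h natrM mulrC mulKf // Sn_neq0.
have F2 : ('C(n, i.+2))%:R = (n%:R - i%:R - 1) * ('C(n, i.+1))%:R / (i.+2)%:R :> R.
  case: (ltngtP i n) hin => // [hlt _ | <- _].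
    have h : (i.+2 * 'C(n, i.+2) = (n - i.+1) * 'C(n, i.+1))%N by rewrite -mul_bin_left -addn1.
    have e : (n - i.+1)%:R = n%:R - i%:R - 1 :> R by rewrite natrB //; ring.
    by rewrite -e -natrM -h natrM mulrC mulKf // Sn_neq0.
  by rewrite !bin_small // !(mul0r, mulr0).
have F3 : ('C(n.+1, i.+2))%:R = (n.+1)%:R * ('C(n, i.+1))%:R / (i.+2)%:R :> R.
  have h : (n.+1 * 'C(n, i.+1) = i.+2 * 'C(n.+1, i.+2))%N by rewrite -mul_bin_diag.
  by rewrite -natrM h natrM mulrC mulKf // Sn_neq0.
have S2 : sL R i.+2 = ((2 * i.+2)%:R * sL R i.+1 - (i.+1)%:R * sL R i) / (i.+2)%:R.
  by rewrite -sL_rec addrK mulrC mulKf // Sn_neq0.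
rewrite F3 F2 F1 S2.
have := Sn_neq0 R i; have := Sn_neq0 R i.+1 => h2 h1.
field; apply/andP; split.
- by rewrite (_ : 1 + i%:R = (i.+1)%:R) ?pnatr_eq0 //; ring.
- by rewrite (_ : 2 + i%:R = (i.+2)%:R) ?pnatr_eq0 //; ring.
Qed.

Theorem lemma5p2 (R : numFieldType) (n : nat) :
  (n.+1)%:R *: QL R n.+1 =
    ('X - 2%:R *: 'X ^+ 2 + 'X ^+ 3) * (QL R n)^`()
    + ((n.+1)%:R%:P - 2%:R *: 'X - n%:R *: 'X ^+ 2) * QL R n.
Proof.
set P := QL R n.
have E : ('X - 2%:R *: 'X ^+ 2 + 'X ^+ 3) * P^`()
    + ((n.+1)%:R%:P - 2%:R *: 'X - n%:R *: 'X ^+ 2) * P =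
   ('X * P^`()) - 2%:R *: ('X * ('X * P^`())) + 'X * ('X * ('X * P^`()))
   + (n.+1)%:R *: P - 2%:R *: ('X * P) - n%:R *: ('X * ('X * P)).
  rewrite -!mul_polyC; ring.
rewrite E; apply/polyP => k.
rewrite !(coefD, coefN, coefZ) !coefXM.
case: k => [|[|[|j]]] /=; rewrite ?coef_deriv !coefQL.
- by rewrite !bin0 sL0; ring.
- by rewrite !bin0 !bin1 sL0 sL1; ring.
- transitivity ((-1) ^+ 2 * ((n.+1)%:R * (('C(n.+1, 2))%:R * sL R 2))); first by ring.
  rewrite (key R n 0) bin0; ring.
- transitivity ((-1) ^+ j.+3 * ((n.+1)%:R * (('C(n.+1, j.+3))%:R * sL R j.+3))); first by ring.
  rewrite (key R n j.+1); rewrite !exprS; ring.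
Qed.
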